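(* For every well-typed $\lambda^{dFG}$ expression $e$, all stores $\Sigma,\Sigma'$, heaps $\mu,\mu'$, labels $pc$, environments $\theta$ and values $v$ of $\lambda^{dFG}$: if $\langle\Sigma,\mu,e\rangle\Downarrow^{\theta}_{pc}\langle\Sigma',\mu',v\rangle$, then in the forcing semantics of $\lambda^{dCG}$, $\langle\langle\!\langle\Sigma\rangle\!\rangle,\langle\!\langle\mu\rangle\!\rangle,pc,\langle\!\langle e\rangle\!\rangle\rangle\Downarrow^{\langle\!\langle\theta\rangle\!\rangle}\langle\langle\!\langle\Sigma'\rangle\!\rangle,\langle\!\langle\mu'\rangle\!\rangle,pc,\langle\!\langle v\rangle\!\rangle\rangle$.
   Context: Labels form a lattice $(\mathcal{L},\sqsubseteq,\sqcup)$. Lists: $|X|$ length, $X[n]$ entry $n$ (from 0), $X[n\mapsto y]$ replacement (append if $n=|X|$). Source calculus $\lambda^{dFG}$: types $\mathbf{unit},\tau_1\to\tau_2,\tau_1+\tau_2,\tau_1\times\tau_2,\mathcal{L},\mathbf{Ref}\,s\,\tau$ ($s\in\{I,S\}$, standard simple typing); expressions $x,\lambda x.e,e_1e_2,(),\ell,(e_1,e_2),\mathbf{fst}(e),\mathbf{snd}(e),\mathbf{inl}(e),\mathbf{inr}(e),\mathbf{case}(e,x.e_1,x.e_2),\mathbf{getLabel},\mathbf{labelOf}(e),e_1\sqsubseteq^?e_2,\mathbf{taint}(e_1,e_2),\mathbf{new}(e),!e,e_1:=e_2,\mathbf{labelOfRef}(e)$; raw values $r::=()\mid(x.e,\theta)\mid\mathbf{inl}(v)\mid\mathbf{inr}(v)\mid(v_1,v_2)\mid\ell\mid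 n_\ell\mid n$; values $v::=r^\ell$; $r^\ell\sqcup\ell'=r^{\ell\sqcup\ell'}$; stores map labels to lists of raw values; heaps are lists of values. Evaluation $\langle\Sigma,\mu,e\rangle\Downarrow^\theta_{pc}\langle\Sigma',\mu',v\rangle$ (store/heap threaded left to right through premises; ''$e\Downarrow v$'' uses current $\theta,pc$): $x\Downarrow\theta(x)\sqcup pc$; $()\Downarrow()^{pc}$; $\ell\Downarrow\ell^{pc}$; $\lambda x.e\Downarrow(x.e,\theta)^{pc}$; $\mathbf{getLabel}\Downarrow pc^{pc}$; $e_1e_2\Downarrow v$ if $e_1\Downarrow(x.e,\theta')^\ell$, $e_2\Downarrow v_2$ and $e$ evaluates to $v$ in $\theta'[x\mapsto v_2]$ at $pc\sqcup\ell$; $\mathbf{inl}(e)\Downarrow\mathbf{inl}(v)^{pc}$, $\mathbf{inr}(e)\Downarrow\mathbf{inr}(v)^{pc}$ if $e\Downarrow v$; $\mathbf{case}(e,x.e_1,x.e_2)\Downarrow v$ if $e\Downarrow\mathbf{inl}(v_1)^\ell$ and $e_1$ gives $v$ in $\theta[x\mapsto v_1]$ at $pc\sqcup\ell$ (symmetric for $\mathbf{inr}$, $e_2$); $(e_1,e_2)\Downarrow(v_1,v_2)^{pc}$; if $e\Downarrow(v_1,v_2)^\ell$ then $\mathbf{fst}(e)\Downarrow v_1\sqcup\ell$, $\mathbf{snd}(e)\Downarrow v_2\sqcup\ell$; if $e\Downarrow r^\ell$ then $\mathbf{labelOf}(e)\Downarrow\ell^\ell$; if $e_1\Downarrow\ell_1^{\ell_1'}$,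 $e_2\Downarrow\ell_2^{\ell_2'}$ then $e_1\sqsubseteq^?e_2\Downarrow\mathbf{inl}(()^{pc})^{\ell_1'\sqcup\ell_2'}$ if $\ell_1\sqsubseteq\ell_2$ else $\mathbf{inr}(()^{pc})^{\ell_1'\sqcup\ell_2'}$; $\mathbf{taint}(e_1,e_2)\Downarrow v$ if $e_1\Downarrow\ell^{\ell'}$, $\ell'\sqsubseteq\ell$, and $e_2$ gives $v$ at program counter $\ell$. References of type $\mathbf{Ref}\,I$: $\mathbf{new}(e)\Downarrow(n_\ell)^{pc}$ if $e\Downarrow r^\ell$ with store $\Sigma'$, $n=|\Sigma'(\ell)|$, new store $\Sigma'[\ell\mapsto\Sigma'(\ell)[n\mapsto r]]$; $!e\Downarrow r^{\ell\sqcup\ell'}$ if $e\Downarrow(n_\ell)^{\ell'}$ with store $\Sigma'$ and $\Sigma'(\ell)[n]=r$; $e_1:=e_2\Downarrow()^{pc}$ if $e_1\Downarrow(n_\ell)^{\ell_1}$, $\ell_1\sqsubseteq\ell$, $e_2\Downarrow r^{\ell_2}$ with store $\Sigma''$, $\ell_2\sqsubseteq\ell$, new store $\Sigma''[\ell\mapsto\Sigma''(\ell)[n\mapsto r]]$; $\mathbf{labelOfRef}(e)\Downarrow\ell^{\ell\sqcup\ell'}$ if $e\Downarrow(n_\ell)^{\ell'}$. References of type $\mathbf{Ref}\,S$: $\mathbf{new}(e)\Downarrow n^{pc}$ if $e\Downarrow v$ with heap $\mu'$, $n=|\mu'|$, new heap $\mu'[n\mapsto v]$; $!e\Downarrow r^{\ell\sqcup\ell'}$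 if $e\Downarrow n^\ell$, heap entry $r^{\ell'}$ at $n$; $\mathbf{labelOfRef}(e)\Downarrow\ell_2^{\ell_1\sqcup\ell_2}$ if $e\Downarrow n^{\ell_1}$, heap entry $r^{\ell_2}$; $e_1:=e_2\Downarrow()^{pc}$ if $e_1\Downarrow n^\ell$, $e_2\Downarrow r_2^{\ell_2}$ with heap $\mu''$, $\mu''[n]=r_1^{\ell_1}$, $\ell\sqsubseteq\ell_1$, new heap $\mu''[n\mapsto r_2^{\ell_2\sqcup\ell}]$. Target calculus $\lambda^{dCG}$: types add $\mathbf{LIO}\,\tau$, $\mathbf{Labeled}\,\tau$; values $()\mid(x.e,\theta)\mid\mathbf{inl}(v)\mid\mathbf{inr}(v)\mid(v_1,v_2)\mid\ell\mid\mathbf{Labeled}\,\ell\,v\mid(t,\theta)\mid n_\ell\mid n$; expressions: the pure constructs $x,\lambda x.e,e_1e_2,(),\ell$, pairs, projections, injections, $\mathbf{case}$, $e_1\sqsubseteq^?e_2$, and thunks $t::=\mathbf{return}(e)\mid\mathbf{bind}(e,x.e)\mid\mathbf{unlabel}(e)\mid\mathbf{toLabeled}(e)\mid\mathbf{labelOf}(e)\mid\mathbf{getLabel}\mid\mathbf{taint}(e)\mid\mathbf{new}(e)\mid!e\mid e_1:=e_2\mid\mathbf{labelOfRef}(e)$; stores map labels to lists of values, heaps are lists of $\mathbf{Labeled}\,\ell\,v$. Pure semantics $e\Downarrow^\theta v$: standard call-by-value environment semantics ($x\Downarrow\theta(x)$, $\lambda x.e\Downarrow(x.e,\theta)$, thunk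 $t\Downarrow(t,\theta)$, application of function closures, componentwise pairs/injections/projections, case on injections binding $x$, $e_1\sqsubseteq^?e_2$ yields $\mathbf{inl}(())$ if the labels satisfy $\ell_1\sqsubseteq\ell_2$ else $\mathbf{inr}(())$). Forcing: $\langle\Sigma,\mu,pc,e\rangle\Downarrow^\theta c'$ iff $e\Downarrow^\theta(t,\theta')$ and $\langle\Sigma,\mu,pc,t\rangle\Downarrow^{\theta'}c'$. Thunk rules (state unchanged unless said): $\mathbf{return}(e)$ gives $v$ where $e\Downarrow v$; $\mathbf{bind}(e_1,x.e_2)$ forces $e_1$ to get $\langle\Sigma',\mu',pc',v_1\rangle$ then forces $e_2$ in $\theta[x\mapsto v_1]$ from that state; $\mathbf{toLabeled}(e)$: forcing $e$ gives $\langle\Sigma',\mu',pc',v\rangle$, result $\langle\Sigma',\mu',pc,\mathbf{Labeled}\,pc'\,v\rangle$; $\mathbf{unlabel}(e)$ with $e\Downarrow\mathbf{Labeled}\,\ell\,v$ gives $v$ with program counter $pc\sqcup\ell$; $\mathbf{labelOf}(e)$ with $e\Downarrow\mathbf{Labeled}\,\ell\,v$ gives $\ell$ with program counter $pc\sqcup\ell$; $\mathbf{getLabel}$ gives $pc$; $\mathbf{taint}(e)$ with $e\Downarrow\ell$ gives $()$ with program counter $pc\sqcup\ell$; $\mathbf{Ref}\,I$: $\mathbf{new}(e)$ with $e\Downarrow\mathbf{Labeled}\,\ell\,v$, $pc\sqsubseteq\ell$, $n=|\Sigma(\ell)|$ gives $n_\ell$ and store $\Sigma[\ell\mapsto\Sigma(\ell)[n\mapsto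 v]]$; $!e$ with $e\Downarrow n_\ell$ gives $\Sigma(\ell)[n]$ with pc $pc\sqcup\ell$; $e_1:=e_2$ with $e_1\Downarrow n_{\ell_1}$, $e_2\Downarrow\mathbf{Labeled}\,\ell_2\,v$, $\ell_2\sqsubseteq\ell_1$, $pc\sqsubseteq\ell_1$ gives $()$ and store $\Sigma[\ell_1\mapsto\Sigma(\ell_1)[n\mapsto v]]$; $\mathbf{labelOfRef}(e)$ with $e\Downarrow n_\ell$ gives $\ell$ with pc $pc\sqcup\ell$; $\mathbf{Ref}\,S$: $\mathbf{new}(e)$ with $e\Downarrow\mathbf{Labeled}\,\ell\,v$, $pc\sqsubseteq\ell$, $n=|\mu|$ gives $n$ and heap $\mu[n\mapsto\mathbf{Labeled}\,\ell\,v]$; $!e$ with $e\Downarrow n$, $\mu[n]=\mathbf{Labeled}\,\ell\,v$ gives $v$ with pc $pc\sqcup\ell$; $\mathbf{labelOfRef}(e)$ likewise gives $\ell$ with pc $pc\sqcup\ell$; $e_1:=e_2$ with $e_1\Downarrow n$, $e_2\Downarrow\mathbf{Labeled}\,\ell'\,v$, $\mu[n]=\mathbf{Labeled}\,\ell\,v_0$, $pc\sqsubseteq\ell$ gives $()$ and heap $\mu[n\mapsto\mathbf{Labeled}\,(pc\sqcup\ell')\,v]$. Translation $\langle\!\langle\cdot\rangle\!\rangle$. Notation: $y\leftarrow e_1;e_2$ means $\mathbf{bind}(e_1,y.e_2)$ and $e_1;e_2$ means $\mathbf{bind}(e_1,y.e_2)$ with $y$ fresh; $\mathbf{if}\,e\,\mathbf{then}\,e_1\,\mathbf{else}\,e_2$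 means $\mathbf{case}(e,\_.e_1,\_.e_2)$. Expressions: $\langle\!\langle()\rangle\!\rangle=\mathbf{toLabeled}(\mathbf{return}(()))$; $\langle\!\langle\ell\rangle\!\rangle=\mathbf{toLabeled}(\mathbf{return}(\ell))$; $\langle\!\langle\lambda x.e\rangle\!\rangle=\mathbf{toLabeled}(\mathbf{return}(\lambda x.\langle\!\langle e\rangle\!\rangle))$; $\langle\!\langle\mathbf{inl}(e)\rangle\!\rangle=\mathbf{toLabeled}(lv\leftarrow\langle\!\langle e\rangle\!\rangle;\mathbf{return}(\mathbf{inl}(lv)))$, same for $\mathbf{inr}$; $\langle\!\langle(e_1,e_2)\rangle\!\rangle=\mathbf{toLabeled}(lv_1\leftarrow\langle\!\langle e_1\rangle\!\rangle;lv_2\leftarrow\langle\!\langle e_2\rangle\!\rangle;\mathbf{return}((lv_1,lv_2)))$; $\langle\!\langle x\rangle\!\rangle=\mathbf{toLabeled}(\mathbf{unlabel}(x))$; $\langle\!\langle e_1e_2\rangle\!\rangle=\mathbf{toLabeled}(lv_1\leftarrow\langle\!\langle e_1\rangle\!\rangle;lv_2\leftarrow\langle\!\langle e_2\rangle\!\rangle;v_1\leftarrow\mathbf{unlabel}(lv_1);lv\leftarrow v_1\,lv_2;\mathbf{unlabel}(lv))$; $\langle\!\langle\mathbf{case}(e,x.e_1,x.e_2)\rangle\!\rangle=\mathbf{toLabeled}(lv\leftarrow\langle\!\langle e\rangle\!\rangle;v\leftarrow\mathbf{unlabel}(lv);lv'\leftarrow\mathbf{case}(v,x.\langle\!\langle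 e_1\rangle\!\rangle,x.\langle\!\langle e_2\rangle\!\rangle);\mathbf{unlabel}(lv'))$; $\langle\!\langle\mathbf{fst}(e)\rangle\!\rangle=\mathbf{toLabeled}(lv\leftarrow\langle\!\langle e\rangle\!\rangle;v\leftarrow\mathbf{unlabel}(lv);\mathbf{unlabel}(\mathbf{fst}(v)))$, same for $\mathbf{snd}$; $\langle\!\langle e_1\sqsubseteq^?e_2\rangle\!\rangle=\mathbf{toLabeled}(lv_1\leftarrow\langle\!\langle e_1\rangle\!\rangle;lv_2\leftarrow\langle\!\langle e_2\rangle\!\rangle;lu\leftarrow\mathbf{toLabeled}(\mathbf{return}(()));v_1\leftarrow\mathbf{unlabel}(lv_1);v_2\leftarrow\mathbf{unlabel}(lv_2);\mathbf{return}(\mathbf{if}\,v_1\sqsubseteq^?v_2\,\mathbf{then}\,\mathbf{inl}(lu)\,\mathbf{else}\,\mathbf{inr}(lu)))$; $\langle\!\langle\mathbf{taint}(e_1,e_2)\rangle\!\rangle=\mathbf{toLabeled}(lv_1\leftarrow\langle\!\langle e_1\rangle\!\rangle;v_1\leftarrow\mathbf{unlabel}(lv_1);\mathbf{taint}(v_1);lv_2\leftarrow\langle\!\langle e_2\rangle\!\rangle;\mathbf{unlabel}(lv_2))$; $\langle\!\langle\mathbf{labelOf}(e)\rangle\!\rangle=\mathbf{toLabeled}(lv\leftarrow\langle\!\langle e\rangle\!\rangle;\mathbf{labelOf}(lv))$; $\langle\!\langle\mathbf{getLabel}\rangle\!\rangle=\mathbf{toLabeled}(\mathbf{getLabel})$;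 $\langle\!\langle\mathbf{new}(e)\rangle\!\rangle=\mathbf{toLabeled}(lv\leftarrow\langle\!\langle e\rangle\!\rangle;\mathbf{new}(lv))$; $\langle\!\langle!e\rangle\!\rangle=\mathbf{toLabeled}(lr\leftarrow\langle\!\langle e\rangle\!\rangle;r\leftarrow\mathbf{unlabel}(lr);!r)$; $\langle\!\langle e_1:=e_2\rangle\!\rangle=\mathbf{toLabeled}(lr\leftarrow\langle\!\langle e_1\rangle\!\rangle;lv\leftarrow\langle\!\langle e_2\rangle\!\rangle;r\leftarrow\mathbf{unlabel}(lr);r:=lv);\mathbf{toLabeled}(\mathbf{return}(()))$; $\langle\!\langle\mathbf{labelOfRef}(e)\rangle\!\rangle=\mathbf{toLabeled}(lr\leftarrow\langle\!\langle e\rangle\!\rangle;r\leftarrow\mathbf{unlabel}(lr);\mathbf{labelOfRef}(r))$. Here every nested translated subexpression $\langle\!\langle e_i\rangle\!\rangle$ (and the nested $\mathbf{toLabeled}(\mathbf{return}(()))$) is evaluated in an environment from which the auxiliary variables $lv,lv_1,lv_2,lv',lu,lr,r,v,v_1,v_2$ introduced by the translation have been removed (formally via a weakening construct $\mathbf{wken}(\bar x,e)$ that evaluates $e$ in $\theta$ with $\bar x$ removed from its domain), so that closures never capture them. Values: $\langle\!\langle r^\ell\rangle\!\rangle=\mathbf{Labeled}\,\ell\,\langle\!\langle r\rangle\!\rangle$; $\langle\!\langle()\rangle\!\rangle=()$, $\langle\!\langle\ell\rangle\!\rangle=\ell$, pairs and injections homomorphically; $\langle\!\langle(x.e,\theta)\rangle\!\rangle=(x.\langle\!\langle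 e\rangle\!\rangle,\langle\!\langle\theta\rangle\!\rangle)$; $\langle\!\langle n_\ell\rangle\!\rangle=n_\ell$; $\langle\!\langle n\rangle\!\rangle=n$. Environments pointwise, $\langle\!\langle\theta\rangle\!\rangle(x)=\langle\!\langle\theta(x)\rangle\!\rangle$; stores pointwise on each memory, translating each raw value $r$ to $\langle\!\langle r\rangle\!\rangle$; heaps pointwise, $\langle\!\langle r^\ell:\mu\rangle\!\rangle=\langle\!\langle r^\ell\rangle\!\rangle:\langle\!\langle\mu\rangle\!\rangle$. *)

(* Defs.v *)
From HB Require Import structures.
From mathcomp Require Import all_boot all_order.
Set Implicit Arguments. Unset Strict Implicit. Unset Printing Implicit Defensive.

Fixpoint list_nth (A : Type) (X : list A) (n : nat) : option A :=
  match X, n with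
  | [::], _ => None
  | x :: _, 0 => Some x
  | _ :: X', n'.+1 => list_nth X' n'
  end.

(* X[n |-> y] : replacement of entry n, append if n = |X|; undefined (None)
   if n > |X| *)
Fixpoint list_set (A : Type) (X : list A) (n : nat) (y : A) : option (list A) :=
  match X, n with
  | [::], 0 => Some [:: y]
  | [::], _.+1 => None
  | _ :: X', 0 => Some (y :: X')
  | x :: X', n'.+1 => option_map (cons x) (list_set X' n' y)
  end.

Definition var := nat.

Inductive rkind := KI | KS.

Inductive ty :=
| TyUnit | TyFun (t1 t2 : ty) | TySum (t1 t2 : ty) | TyProd (t1 t2 : ty)
| TyLabel | TyRef (s : rkind) (t : ty).

(* auxiliary variables introduced by the translation (disjoint from source
   variables); Ay is the fresh variable of "e1; e2", Awild the "_" of if *)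
Inductive aux := Alv | Alv1 | Alv2 | Alv' | Alu | Alr | Ar | Av | Av1 | Av2 | Ay | Awild.

Definition aux_eq_dec (a b : aux) : {a = b} + {a <> b}.
Proof. decide equality. Defined.

Inductive tvar := TSrc (x : var) | TAux (a : aux).

Definition tvar_eqb (x y : tvar) : bool :=
  match x, y with
  | TSrc a, TSrc b => Nat.eqb a b
  | TAux a, TAux b => if aux_eq_dec a b then true else false
  | _, _ => false
  end.

Definition aux_vars : list tvar :=
  map TAux [:: Alv; Alv1; Alv2; Alv'; Alu; Alr; Ar; Av; Av1; Av2; Ay; Awild].

Section Lang.
Variables (d : Order.disp_t) (L : latticeType d).
Local Open Scope order_scope.

(* Source calculus lambda^dFG                                               *)

(* The reference operations carry the kind s of the reference type they
   operate on (determined by the typing derivation in the paper). *)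
Inductive expr :=
| EVar (x : var)
| ELam (x : var) (e : expr)
| EApp (e1 e2 : expr)
| EUnit
| ELab (l : L)
| EPair (e1 e2 : expr)
| EFst (e : expr)
| ESnd (e : expr)
| EInl (e : expr)
| EInr (e : expr)
| ECase (e : expr) (x : var) (e1 e2 : expr)
| EGetLabel
| ELabelOf (e : expr)
| ELeq (e1 e2 : expr)
| ETaint (e1 e2 : expr)
| ENew (s : rkind) (e : expr)
| ERead (s : rkind) (e : expr)
| EWrite (s : rkind) (e1 e2 : expr)
| ELabelOfRef (s : rkind) (e : expr).

Fixpoint lookup_ty (G : list (var * ty)) (x : var) : option ty :=
  match G with
  | [::] => None
  | (y, t) :: G' => if Nat.eqb x y then Some t else lookup_ty G' x
  end.

Inductive has_type : list (var * ty) -> expr -> ty -> Prop :=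
| ty_var G x t : lookup_ty G x = Some t -> has_type G (EVar x) t
| ty_lam G x e t1 t2 :
    has_type ((x, t1) :: G) e t2 -> has_type G (ELam x e) (TyFun t1 t2)
| ty_app G e1 e2 t1 t2 :
    has_type G e1 (TyFun t1 t2) -> has_type G e2 t1 -> has_type G (EApp e1 e2) t2
| ty_unit G : has_type G EUnit TyUnit
| ty_lab G l : has_type G (ELab l) TyLabel
| ty_pair G e1 e2 t1 t2 :
    has_type G e1 t1 -> has_type G e2 t2 -> has_type G (EPair e1 e2) (TyProd t1 t2)
| ty_fst G e t1 t2 : has_type G e (TyProd t1 t2) -> has_type G (EFst e) t1
| ty_snd G e t1 t2 : has_type G e (TyProd t1 t2) -> has_type G (ESnd e) t2
| ty_inl G e t1 t2 : has_type G e t1 -> has_type G (EInl e) (TySum t1 t2)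
| ty_inr G e t1 t2 : has_type G e t2 -> has_type G (EInr e) (TySum t1 t2)
| ty_case G e x e1 e2 t1 t2 t :
    has_type G e (TySum t1 t2) -> has_type ((x, t1) :: G) e1 t ->
    has_type ((x, t2) :: G) e2 t -> has_type G (ECase e x e1 e2) t
| ty_getlabel G : has_type G EGetLabel TyLabel
| ty_labelof G e t : has_type G e t -> has_type G (ELabelOf e) TyLabel
| ty_leq G e1 e2 :
    has_type G e1 TyLabel -> has_type G e2 TyLabel ->
    has_type G (ELeq e1 e2) (TySum TyUnit TyUnit)
| ty_taint G e1 e2 t :
    has_type G e1 TyLabel -> has_type G e2 t -> has_type G (ETaint e1 e2) t
| ty_new G s e t : has_type G e t -> has_type G (ENew s e) (TyRef s t)
| ty_read G s e t : has_type G e (TyRef s t) -> has_type G (ERead s e) t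
| ty_write G s e1 e2 t :
    has_type G e1 (TyRef s t) -> has_type G e2 t -> has_type G (EWrite s e1 e2) TyUnit
| ty_labelofref G s e t :
    has_type G e (TyRef s t) -> has_type G (ELabelOfRef s e) TyLabel.

Definition well_typed (e : expr) : Prop := exists G t, has_type G e t.

Inductive raw :=
| RUnit
| RClos (x : var) (e : expr) (th : env)
| RInl (v : value)
| RInr (v : value)
| RPair (v1 v2 : value)
| RLabel (l : L)
| RRefI (n : nat) (l : L)
| RRefS (n : nat)
with value := Val (r : raw) (l : L)
with env := ENil | ECons (x : var) (v : value) (th : env).

Fixpoint env_lookup (th : env) (x : var) : option value :=
  match th with
  | ENil => None
  | ECons y v th' => if Nat.eqb x y then Some v else env_lookup th' x
  end.

Definition vjoin (v : value) (l' : L) : value :=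
  let: Val r l := v in Val r (l `|` l').

Definition store := L -> list raw.
Definition heap := list value.

Definition upd (A : Type) (S : L -> A) (l : L) (X : A) : L -> A :=
  fun l' => if l' == l then X else S l'.

Inductive eval : store -> heap -> env -> L -> expr -> store -> heap -> value -> Prop :=
| ev_var S m th pc x v :
    env_lookup th x = Some v -> eval S m th pc (EVar x) S m (vjoin v pc)
| ev_unit S m th pc : eval S m th pc EUnit S m (Val RUnit pc)
| ev_lab S m th pc l : eval S m th pc (ELab l) S m (Val (RLabel l) pc)
| ev_lam S m th pc x e : eval S m th pc (ELam x e) S m (Val (RClos x e th) pc)
| ev_getlabel S m th pc : eval S m th pc EGetLabel S m (Val (RLabel pc) pc)
| ev_app S m th pc e1 e2 S1 m1 x e th' l S2 m2 v2 S3 m3 v :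
    eval S m th pc e1 S1 m1 (Val (RClos x e th') l) ->
    eval S1 m1 th pc e2 S2 m2 v2 ->
    eval S2 m2 (ECons x v2 th') (pc `|` l) e S3 m3 v ->
    eval S m th pc (EApp e1 e2) S3 m3 v
| ev_inl S m th pc e S' m' v :
    eval S m th pc e S' m' v -> eval S m th pc (EInl e) S' m' (Val (RInl v) pc)
| ev_inr S m th pc e S' m' v :
    eval S m th pc e S' m' v -> eval S m th pc (EInr e) S' m' (Val (RInr v) pc)
| ev_case_inl S m th pc e x e1 e2 S1 m1 v1 l S2 m2 v :
    eval S m th pc e S1 m1 (Val (RInl v1) l) ->
    eval S1 m1 (ECons x v1 th) (pc `|` l) e1 S2 m2 v ->
    eval S m th pc (ECase e x e1 e2) S2 m2 v
| ev_case_inr S m th pc e x e1 e2 S1 m1 v1 l S2 m2 v :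
    eval S m th pc e S1 m1 (Val (RInr v1) l) ->
    eval S1 m1 (ECons x v1 th) (pc `|` l) e2 S2 m2 v ->
    eval S m th pc (ECase e x e1 e2) S2 m2 v
| ev_pair S m th pc e1 e2 S1 m1 v1 S2 m2 v2 :
    eval S m th pc e1 S1 m1 v1 -> eval S1 m1 th pc e2 S2 m2 v2 ->
    eval S m th pc (EPair e1 e2) S2 m2 (Val (RPair v1 v2) pc)
| ev_fst S m th pc e S' m' v1 v2 l :
    eval S m th pc e S' m' (Val (RPair v1 v2) l) ->
    eval S m th pc (EFst e) S' m' (vjoin v1 l)
| ev_snd S m th pc e S' m' v1 v2 l :
    eval S m th pc e S' m' (Val (RPair v1 v2) l) ->
    eval S m th pc (ESnd e) S' m' (vjoin v2 l)
| ev_labelof S m th pc e S' m' r l :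
    eval S m th pc e S' m' (Val r l) ->
    eval S m th pc (ELabelOf e) S' m' (Val (RLabel l) l)
| ev_leq_true S m th pc e1 e2 S1 m1 l1 l1' S2 m2 l2 l2' :
    eval S m th pc e1 S1 m1 (Val (RLabel l1) l1') ->
    eval S1 m1 th pc e2 S2 m2 (Val (RLabel l2) l2') ->
    l1 <= l2 ->
    eval S m th pc (ELeq e1 e2) S2 m2 (Val (RInl (Val RUnit pc)) (l1' `|` l2'))
| ev_leq_false S m th pc e1 e2 S1 m1 l1 l1' S2 m2 l2 l2' :
    eval S m th pc e1 S1 m1 (Val (RLabel l1) l1') ->
    eval S1 m1 th pc e2 S2 m2 (Val (RLabel l2) l2') ->
    ~~ (l1 <= l2) ->
    eval S m th pc (ELeq e1 e2) S2 m2 (Val (RInr (Val RUnit pc)) (l1' `|` l2'))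
| ev_taint S m th pc e1 e2 S1 m1 l l' S2 m2 v :
    eval S m th pc e1 S1 m1 (Val (RLabel l) l') ->
    l' <= l ->
    eval S1 m1 th l e2 S2 m2 v ->
    eval S m th pc (ETaint e1 e2) S2 m2 v
| ev_newI S m th pc e S' m' r l n X :
    eval S m th pc e S' m' (Val r l) ->
    n = size (S' l) ->
    list_set (S' l) n r = Some X ->
    eval S m th pc (ENew KI e) (upd S' l X) m' (Val (RRefI n l) pc)
| ev_readI S m th pc e S' m' n l l' r :
    eval S m th pc e S' m' (Val (RRefI n l) l') ->
    list_nth (S' l) n = Some r ->
    eval S m th pc (ERead KI e) S' m' (Val r (l `|` l'))
| ev_writeI S m th pc e1 e2 S1 m1 n l l1 S2 m2 r l2 X :
    eval S m th pc e1 S1 m1 (Val (RRefI n l) l1) ->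
    l1 <= l ->
    eval S1 m1 th pc e2 S2 m2 (Val r l2) ->
    l2 <= l ->
    list_set (S2 l) n r = Some X ->
    eval S m th pc (EWrite KI e1 e2) (upd S2 l X) m2 (Val RUnit pc)
| ev_labelofrefI S m th pc e S' m' n l l' :
    eval S m th pc e S' m' (Val (RRefI n l) l') ->
    eval S m th pc (ELabelOfRef KI e) S' m' (Val (RLabel l) (l `|` l'))
| ev_newS S m th pc e S' m' v n m'' :
    eval S m th pc e S' m' v ->
    n = size m' ->
    list_set m' n v = Some m'' ->
    eval S m th pc (ENew KS e) S' m'' (Val (RRefS n) pc)
| ev_readS S m th pc e S' m' n l r l' :
    eval S m th pc e S' m' (Val (RRefS n) l) ->
    list_nth m' n = Some (Val r l') ->
    eval S m th pc (ERead KS e) S' m' (Val r (l `|` l'))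
| ev_labelofrefS S m th pc e S' m' n l1 r l2 :
    eval S m th pc e S' m' (Val (RRefS n) l1) ->
    list_nth m' n = Some (Val r l2) ->
    eval S m th pc (ELabelOfRef KS e) S' m' (Val (RLabel l2) (l1 `|` l2))
| ev_writeS S m th pc e1 e2 S1 m1 n l S2 m2 r2 l2 r1 l1 m3 :
    eval S m th pc e1 S1 m1 (Val (RRefS n) l) ->
    eval S1 m1 th pc e2 S2 m2 (Val r2 l2) ->
    list_nth m2 n = Some (Val r1 l1) ->
    l <= l1 ->
    list_set m2 n (Val r2 (l2 `|` l)) = Some m3 ->
    eval S m th pc (EWrite KS e1 e2) S2 m3 (Val RUnit pc).

(* Target calculus lambda^dCG                                               *)

Inductive texpr :=
| TVar (x : tvar)
| TLam (x : tvar) (e : texpr)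
| TApp (e1 e2 : texpr)
| TUnit
| TLab (l : L)
| TPair (e1 e2 : texpr)
| TFst (e : texpr)
| TSnd (e : texpr)
| TInl (e : texpr)
| TInr (e : texpr)
| TCase (e : texpr) (x : tvar) (e1 e2 : texpr)
| TLeq (e1 e2 : texpr)
| TWken (xs : list tvar) (e : texpr)   (* weakening: evaluate e without xs *)
| TThunk (t : tthunk)
with tthunk :=
| TReturn (e : texpr)
| TBind (e1 : texpr) (x : tvar) (e2 : texpr)
| TUnlabel (e : texpr)
| TToLabeled (e : texpr)
| TLabelOf (e : texpr)
| TGetLabel
| TTaint (e : texpr)
| TNew (s : rkind) (e : texpr)
| TRead (s : rkind) (e : texpr)
| TWrite (s : rkind) (e1 e2 : texpr)
| TLabelOfRef (s : rkind) (e : texpr).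

Inductive tvalue :=
| TVUnit
| TVClos (x : tvar) (e : texpr) (th : tenv)
| TVInl (v : tvalue)
| TVInr (v : tvalue)
| TVPair (v1 v2 : tvalue)
| TVLab (l : L)
| TVLabeled (l : L) (v : tvalue)
| TVThunk (t : tthunk) (th : tenv)
| TVRefI (n : nat) (l : L)
| TVRefS (n : nat)
with tenv := TENil | TECons (x : tvar) (v : tvalue) (th : tenv).

Fixpoint tenv_lookup (th : tenv) (x : tvar) : option tvalue :=
  match th with
  | TENil => None
  | TECons y v th' => if tvar_eqb x y then Some v else tenv_lookup th' x
  end.

Fixpoint tremove (xs : list tvar) (th : tenv) : tenv :=
  match th with
  | TENil => TENil
  | TECons y v th' =>
      if has (tvar_eqb y) xs then tremove xs th' else TECons y v (tremove xs th')
  end.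

Definition tstore := L -> list tvalue.
Definition theap := list tvalue.

Inductive peval : tenv -> texpr -> tvalue -> Prop :=
| pe_var th x v : tenv_lookup th x = Some v -> peval th (TVar x) v
| pe_lam th x e : peval th (TLam x e) (TVClos x e th)
| pe_app th e1 e2 x e th' v2 v :
    peval th e1 (TVClos x e th') -> peval th e2 v2 ->
    peval (TECons x v2 th') e v -> peval th (TApp e1 e2) v
| pe_unit th : peval th TUnit TVUnit
| pe_lab th l : peval th (TLab l) (TVLab l)
| pe_pair th e1 e2 v1 v2 :
    peval th e1 v1 -> peval th e2 v2 -> peval th (TPair e1 e2) (TVPair v1 v2)
| pe_fst th e v1 v2 : peval th e (TVPair v1 v2) -> peval th (TFst e) v1
| pe_snd th e v1 v2 : peval th e (TVPair v1 v2) -> peval th (TSnd e) v2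
| pe_inl th e v : peval th e v -> peval th (TInl e) (TVInl v)
| pe_inr th e v : peval th e v -> peval th (TInr e) (TVInr v)
| pe_case_inl th e x e1 e2 v1 v :
    peval th e (TVInl v1) -> peval (TECons x v1 th) e1 v ->
    peval th (TCase e x e1 e2) v
| pe_case_inr th e x e1 e2 v1 v :
    peval th e (TVInr v1) -> peval (TECons x v1 th) e2 v ->
    peval th (TCase e x e1 e2) v
| pe_leq_true th e1 e2 l1 l2 :
    peval th e1 (TVLab l1) -> peval th e2 (TVLab l2) -> l1 <= l2 ->
    peval th (TLeq e1 e2) (TVInl TVUnit)
| pe_leq_false th e1 e2 l1 l2 :
    peval th e1 (TVLab l1) -> peval th e2 (TVLab l2) -> ~~ (l1 <= l2) ->
    peval th (TLeq e1 e2) (TVInr TVUnit)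
| pe_thunk th t : peval th (TThunk t) (TVThunk t th)
| pe_wken th xs e v : peval (tremove xs th) e v -> peval th (TWken xs e) v.

Inductive force : tstore -> theap -> L -> tenv -> texpr ->
                  tstore -> theap -> L -> tvalue -> Prop :=
| force_intro S m pc th e t th' S' m' pc' v :
    peval th e (TVThunk t th') -> run S m pc th' t S' m' pc' v ->
    force S m pc th e S' m' pc' v
with run : tstore -> theap -> L -> tenv -> tthunk ->
           tstore -> theap -> L -> tvalue -> Prop :=
| run_return S m pc th e v :
    peval th e v -> run S m pc th (TReturn e) S m pc v
| run_bind S m pc th e1 x e2 S1 m1 pc1 v1 S2 m2 pc2 v :
    force S m pc th e1 S1 m1 pc1 v1 ->
    force S1 m1 pc1 (TECons x v1 th) e2 S2 m2 pc2 v ->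
    run S m pc th (TBind e1 x e2) S2 m2 pc2 v
| run_tolabeled S m pc th e S' m' pc' v :
    force S m pc th e S' m' pc' v ->
    run S m pc th (TToLabeled e) S' m' pc (TVLabeled pc' v)
| run_unlabel S m pc th e l v :
    peval th e (TVLabeled l v) -> run S m pc th (TUnlabel e) S m (pc `|` l) v
| run_labelof S m pc th e l v :
    peval th e (TVLabeled l v) -> run S m pc th (TLabelOf e) S m (pc `|` l) (TVLab l)
| run_getlabel S m pc th : run S m pc th TGetLabel S m pc (TVLab pc)
| run_taint S m pc th e l :
    peval th e (TVLab l) -> run S m pc th (TTaint e) S m (pc `|` l) TVUnit
| run_newI S m pc th e l v n X :
    peval th e (TVLabeled l v) -> pc <= l -> n = size (S l) ->
    list_set (S l) n v = Some X ->
    run S m pc th (TNew KI e) (upd S l X) m pc (TVRefI n l)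
| run_readI S m pc th e n l v :
    peval th e (TVRefI n l) -> list_nth (S l) n = Some v ->
    run S m pc th (TRead KI e) S m (pc `|` l) v
| run_writeI S m pc th e1 e2 n l1 l2 v X :
    peval th e1 (TVRefI n l1) -> peval th e2 (TVLabeled l2 v) ->
    l2 <= l1 -> pc <= l1 -> list_set (S l1) n v = Some X ->
    run S m pc th (TWrite KI e1 e2) (upd S l1 X) m pc TVUnit
| run_labelofrefI S m pc th e n l :
    peval th e (TVRefI n l) ->
    run S m pc th (TLabelOfRef KI e) S m (pc `|` l) (TVLab l)
| run_newS S m pc th e l v n m' :
    peval th e (TVLabeled l v) -> pc <= l -> n = size m ->
    list_set m n (TVLabeled l v) = Some m' ->
    run S m pc th (TNew KS e) S m' pc (TVRefS n)
| run_readS S m pc th e n l v :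
    peval th e (TVRefS n) -> list_nth m n = Some (TVLabeled l v) ->
    run S m pc th (TRead KS e) S m (pc `|` l) v
| run_labelofrefS S m pc th e n l v :
    peval th e (TVRefS n) -> list_nth m n = Some (TVLabeled l v) ->
    run S m pc th (TLabelOfRef KS e) S m (pc `|` l) (TVLab l)
| run_writeS S m pc th e1 e2 n l' v l v0 m' :
    peval th e1 (TVRefS n) -> peval th e2 (TVLabeled l' v) ->
    list_nth m n = Some (TVLabeled l v0) -> pc <= l ->
    list_set m n (TVLabeled (pc `|` l') v) = Some m' ->
    run S m pc th (TWrite KS e1 e2) S m' pc TVUnit.

(* Translation << . >>                                                       *)

Definition tv (a : aux) : texpr := TVar (TAux a).
Definition tl (e : texpr) : texpr := TThunk (TToLabeled e).
Definition ret (e : texpr) : texpr := TThunk (TReturn e).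
Definition unl (e : texpr) : texpr := TThunk (TUnlabel e).
Definition bnd (e1 : texpr) (y : aux) (e2 : texpr) : texpr :=
  TThunk (TBind e1 (TAux y) e2).
Definition seqc (e1 e2 : texpr) : texpr := bnd e1 Ay e2.
Definition tif (e e1 e2 : texpr) : texpr := TCase e (TAux Awild) e1 e2.
(* nested subexpressions are evaluated without the auxiliary variables *)
Definition W (e : texpr) : texpr := TWken aux_vars e.

Fixpoint trans (e : expr) : texpr :=
  match e with
  | EUnit => tl (ret TUnit)
  | ELab l => tl (ret (TLab l))
  | ELam x e => tl (ret (TLam (TSrc x) (trans e)))
  | EInl e => tl (bnd (W (trans e)) Alv (ret (TInl (tv Alv))))
  | EInr e => tl (bnd (W (trans e)) Alv (ret (TInr (tv Alv))))
  | EPair e1 e2 =>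
      tl (bnd (W (trans e1)) Alv1 (bnd (W (trans e2)) Alv2
           (ret (TPair (tv Alv1) (tv Alv2)))))
  | EVar x => tl (unl (TVar (TSrc x)))
  | EApp e1 e2 =>
      tl (bnd (W (trans e1)) Alv1 (bnd (W (trans e2)) Alv2
          (bnd (unl (tv Alv1)) Av1 (bnd (TApp (tv Av1) (tv Alv2)) Alv
          (unl (tv Alv))))))
  | ECase e x e1 e2 =>
      tl (bnd (W (trans e)) Alv (bnd (unl (tv Alv)) Av
          (bnd (TCase (tv Av) (TSrc x) (W (trans e1)) (W (trans e2))) Alv'
          (unl (tv Alv')))))
  | EFst e =>
      tl (bnd (W (trans e)) Alv (bnd (unl (tv Alv)) Av (unl (TFst (tv Av)))))
  | ESnd e =>
      tl (bnd (W (trans e)) Alv (bnd (unl (tv Alv)) Av (unl (TSnd (tv Av)))))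
  | ELeq e1 e2 =>
      tl (bnd (W (trans e1)) Alv1 (bnd (W (trans e2)) Alv2
          (bnd (W (tl (ret TUnit))) Alu
          (bnd (unl (tv Alv1)) Av1 (bnd (unl (tv Alv2)) Av2
          (ret (tif (TLeq (tv Av1) (tv Av2)) (TInl (tv Alu)) (TInr (tv Alu)))))))))
  | ETaint e1 e2 =>
      tl (bnd (W (trans e1)) Alv1 (bnd (unl (tv Alv1)) Av1
          (seqc (TThunk (TTaint (tv Av1)))
          (bnd (W (trans e2)) Alv2 (unl (tv Alv2))))))
  | ELabelOf e => tl (bnd (W (trans e)) Alv (TThunk (TLabelOf (tv Alv))))
  | EGetLabel => tl (TThunk TGetLabel)
  | ENew s e => tl (bnd (W (trans e)) Alv (TThunk (TNew s (tv Alv))))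
  | ERead s e =>
      tl (bnd (W (trans e)) Alr (bnd (unl (tv Alr)) Ar (TThunk (TRead s (tv Ar)))))
  | EWrite s e1 e2 =>
      seqc (tl (bnd (W (trans e1)) Alr (bnd (W (trans e2)) Alv
              (bnd (unl (tv Alr)) Ar (TThunk (TWrite s (tv Ar) (tv Alv)))))))
           (W (tl (ret TUnit)))
  | ELabelOfRef s e =>
      tl (bnd (W (trans e)) Alr (bnd (unl (tv Alr)) Ar
          (TThunk (TLabelOfRef s (tv Ar)))))
  end.

Fixpoint trans_raw (r : raw) : tvalue :=
  match r with
  | RUnit => TVUnit
  | RClos x e th => TVClos (TSrc x) (trans e) (trans_env th)
  | RInl v => TVInl (trans_val v)
  | RInr v => TVInr (trans_val v)
  | RPair v1 v2 => TVPair (trans_val v1) (trans_val v2)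
  | RLabel l => TVLab l
  | RRefI n l => TVRefI n l
  | RRefS n => TVRefS n
  end
with trans_val (v : value) : tvalue :=
  match v with Val r l => TVLabeled l (trans_raw r) end
with trans_env (th : env) : tenv :=
  match th with
  | ENil => TENil
  | ECons x v th' => TECons (TSrc x) (trans_val v) (trans_env th')
  end.

Definition trans_store (S : store) : tstore := fun l => map trans_raw (S l).
Definition trans_heap (m : heap) : theap := map trans_val m.

End Lang.

(* Main.v *)
Require Import Defs.
From HB Require Import structures.
From mathcomp Require Import all_boot all_order.
From Stdlib Require Import FunctionalExtensionality.

Set Implicit Arguments. Unset Strict Implicit. Unset Printing Implicit Defensive.
Import Order.Theory.

Section Aux.
Variables (d : Order.disp_t) (L : latticeType d).
Local Open Scope order_scope.

Definition vlab (v : value L) : L := let: Val _ l := v in l.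

Lemma eval_pc_le S m th pc e S' m' v :
  @eval d L S m th pc e S' m' v -> pc <= vlab v.
Proof.
elim=> //=; clear.
all: intros; repeat match goal with
  | v : value _ |- _ => destruct v
  end; simpl in *.
all: try done.
all: try by apply: lexUr.
all: try by apply: lexUl.
all: try by (eapply le_trans; [apply: leUl|eassumption]).
all: by (eapply le_trans; [eapply le_trans|]; eassumption).
Qed.


Lemma F_thunk S m pc th t S' m' pc' v :
  run S m pc th t S' m' pc' v -> @force d L S m pc th (TThunk t) S' m' pc' v.
Proof. by move=> H; econstructor; [constructor|]. Qed.

Lemma F_tl S m pc th e S' m' pc' v pc2 :
  @force d L S m pc th e S' m' pc' v -> pc2 = pc ->
  force S m pc th (tl e) S' m' pc2 (TVLabeled pc' v).
Proof. by move=> H ->; apply: F_thunk; constructor. Qed.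

Lemma F_bnd S m pc th e1 y e2 S1 m1 pc1 v1 S2 m2 pc2 v :
  @force d L S m pc th e1 S1 m1 pc1 v1 ->
  force S1 m1 pc1 (TECons (TAux y) v1 th) e2 S2 m2 pc2 v ->
  force S m pc th (bnd e1 y e2) S2 m2 pc2 v.
Proof. by move=> H1 H2; apply: F_thunk; econstructor; eauto. Qed.

Lemma F_unl S m pc th e l v pc' :
  @peval d L th e (TVLabeled l v) -> pc' = pc `|` l ->
  force S m pc th (unl e) S m pc' v.
Proof. by move=> H ->; apply: F_thunk; constructor. Qed.

Lemma F_ret S m pc th e v :
  @peval d L th e v -> force S m pc th (ret e) S m pc v.
Proof. by move=> H; apply: F_thunk; constructor. Qed.

Lemma F_W S m pc th th0 e S' m' pc' v :
  @force d L S m pc th0 e S' m' pc' v -> tremove aux_vars th = th0 ->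
  force S m pc th (W e) S' m' pc' v.
Proof.
move=> H E; inversion H; subst; econstructor; [|eassumption].
by constructor.
Qed.

Lemma tremove_trans th : tremove aux_vars (@trans_env d L th) = trans_env th.
Proof. by elim: th => //= x v th ->. Qed.

Lemma trans_thunk e : exists t, @trans d L e = TThunk t.
Proof. by case: e => /= *; eexists. Qed.

Lemma list_set_map (A B : Type) (f : A -> B) X n y X' :
  list_set X n y = Some X' -> list_set (map f X) n (f y) = Some (map f X').
Proof.
elim: X n X' => [|x X IH] [|n] X' //=; try by case=> <-.
by case E: (list_set X n y) => [Y|] //= [<-]; rewrite (IH _ _ E).
Qed.

Lemma list_nth_map (A B : Type) (f : A -> B) X n y :
  list_nth X n = Some y -> list_nth (map f X) n = Some (f y).
Proof. elim: X n => [|x X IH] [|n] //=; [by case=> <- | exact: IH]. Qed.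

Lemma trans_store_upd (S : store L) l X :
  trans_store (upd S l X) = upd (trans_store S) l (map (@trans_raw d L) X).
Proof.
apply: functional_extensionality => l'.
by rewrite /trans_store /upd; case: (l' == l).
Qed.

End Aux.

Section Main.
Variables (d : Order.disp_t) (L : latticeType d).
Local Open Scope order_scope.

Lemma F_run S m pc th t S' m' pc1 pc2 v :
  @run d L S m pc th t S' m' pc1 v -> pc2 = pc1 ->
  force S m pc th (TThunk t) S' m' pc2 v.
Proof. by move=> H ->; apply: F_thunk. Qed.

Lemma F_app S m pc th e1 e2 x eb th' v2 S' m' pc' v :
  @peval d L th e1 (TVClos x eb th') -> peval th e2 v2 ->
  force S m pc (TECons x v2 th') eb S' m' pc' v ->
  force S m pc th (TApp e1 e2) S' m' pc' v.
Proof. move=> H1 H2 H3; inversion H3; subst; econstructor; [econstructor; eauto|eauto]. Qed.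

Lemma F_case_inl S m pc th e x e1 e2 v1 S' m' pc' v :
  @peval d L th e (TVInl v1) ->
  force S m pc (TECons x v1 th) e1 S' m' pc' v ->
  force S m pc th (TCase e x e1 e2) S' m' pc' v.
Proof. move=> H1 H3; inversion H3; subst; econstructor; [econstructor; eauto|eauto]. Qed.

Lemma F_case_inr S m pc th e x e1 e2 v1 S' m' pc' v :
  @peval d L th e (TVInr v1) ->
  force S m pc (TECons x v1 th) e2 S' m' pc' v ->
  force S m pc th (TCase e x e1 e2) S' m' pc' v.
Proof. move=> H1 H3; inversion H3; subst; econstructor; [eapply pe_case_inr; eauto|eauto]. Qed.

Lemma lookup_trans th x v :
  env_lookup th x = Some v ->
  tenv_lookup (@trans_env d L th) (TSrc x) = Some (trans_val v).
Proof.
elim: th => //= y w th IH.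
by case: (Nat.eqb x y) => // -[->].
Qed.

End Main.

Ltac pev := repeat (first [ apply: pe_var; reflexivity | econstructor ]).
Ltac tlS := eapply F_tl; [| reflexivity].
Ltac wS := eapply F_W; [eassumption | by rewrite /= ?tremove_trans].
Ltac unlS := eapply F_unl; [pev | reflexivity].

Lemma main (d : Order.disp_t) (L : latticeType d) S m th pc e S' m' v :
  @eval d L S m th pc e S' m' v ->
  force (trans_store S) (trans_heap m) pc (trans_env th) (trans e)
        (trans_store S') (trans_heap m') pc (trans_val v).
Proof.
elim=> {S m th pc e S' m' v}.
- move=> S m th pc x [r l] Hx /=; tlS.
  eapply F_unl; [apply: pe_var; exact: (lookup_trans Hx) | exact: joinC].
- by move=> *; tlS; apply: F_ret; constructor.
- by move=> *; tlS; apply: F_ret; constructor.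
- by move=> *; tlS; apply: F_ret; constructor.
- by move=> *; tlS; apply: F_thunk; constructor.
- move=> S m th pc e1 e2 S1 m1 x e th' l S2 m2 [r2 l2] S3 m3 [r lv] H1 IH1 H2 IH2 H3 IH3.
  have /= P3 := eval_pc_le H3.
  simpl in *; tlS.
  eapply F_bnd; [wS|]; eapply F_bnd; [wS|]; eapply F_bnd; [unlS|].
  eapply F_bnd; [eapply F_app; [pev|pev|exact: IH3]|].
  eapply F_unl; [pev| by rewrite join_r].
- move=> S m th pc e S' m' [r l] H IH /=; simpl in *; tlS.
  by eapply F_bnd; [wS|]; apply: F_ret; pev.
- move=> S m th pc e S' m' [r l] H IH /=; simpl in *; tlS.
  by eapply F_bnd; [wS|]; apply: F_ret; pev.
- move=> S m th pc e x e1 e2 S1 m1 [r1 l1] l S2 m2 [r lv] H1 IH1 H2 IH2.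
  have /= P2 := eval_pc_le H2.
  simpl in *; tlS.
  eapply F_bnd; [wS|]; eapply F_bnd; [unlS|].
  eapply F_bnd; [eapply F_case_inl; [pev|wS]|].
  eapply F_unl; [pev| by rewrite join_r].
- move=> S m th pc e x e1 e2 S1 m1 [r1 l1] l S2 m2 [r lv] H1 IH1 H2 IH2.
  have /= P2 := eval_pc_le H2.
  simpl in *; tlS.
  eapply F_bnd; [wS|]; eapply F_bnd; [unlS|].
  eapply F_bnd; [eapply F_case_inr; [pev|wS]|].
  eapply F_unl; [pev| by rewrite join_r].
- move=> S m th pc e1 e2 S1 m1 [r1 l1] S2 m2 [r2 l2] H1 IH1 H2 IH2.
  simpl in *; tlS.
  by eapply F_bnd; [wS|]; eapply F_bnd; [wS|]; apply: F_ret; pev.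
- move=> S m th pc e S' m' [r1 l1] v2 l H IH.
  have /= P := eval_pc_le H.
  simpl in *; tlS.
  eapply F_bnd; [wS|]; eapply F_bnd; [unlS|].
  eapply F_unl; [pev| by rewrite (join_r P) joinC].
- move=> S m th pc e S' m' v1 [r2 l2] l H IH.
  have /= P := eval_pc_le H.
  simpl in *; tlS.
  eapply F_bnd; [wS|]; eapply F_bnd; [unlS|].
  eapply F_unl; [pev| by rewrite (join_r P) joinC].
- move=> S m th pc e S' m' r l H IH.
  have /= P := eval_pc_le H.
  simpl in *; tlS.
  eapply F_bnd; [wS|].
  eapply F_run; [econstructor; pev | by rewrite join_r].
- move=> S m th pc e1 e2 S1 m1 l1 l1' S2 m2 l2 l2' H1 IH1 H2 IH2 Hle.
  have /= P := eval_pc_le H1.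
  simpl in *; tlS.
  eapply F_bnd; [wS|]; eapply F_bnd; [wS|].
  eapply F_bnd; [eapply F_W; [eapply F_tl; [apply: F_ret; constructor|reflexivity]|reflexivity]|].
  eapply F_bnd; [unlS|].
  eapply (F_bnd (pc1 := (l1' `|` l2')%O)); [eapply F_unl; [pev| by rewrite (join_r P)]|].
  apply: F_ret.
  apply: pe_case_inl; [apply: pe_leq_true; [pev|pev|exact: Hle] | pev].
- move=> S m th pc e1 e2 S1 m1 l1 l1' S2 m2 l2 l2' H1 IH1 H2 IH2 Hle.
  have /= P := eval_pc_le H1.
  simpl in *; tlS.
  eapply F_bnd; [wS|]; eapply F_bnd; [wS|].
  eapply F_bnd; [eapply F_W; [eapply F_tl; [apply: F_ret; constructor|reflexivity]|reflexivity]|].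
  eapply F_bnd; [unlS|].
  eapply (F_bnd (pc1 := (l1' `|` l2')%O)); [eapply F_unl; [pev| by rewrite (join_r P)]|].
  apply: F_ret.
  apply: pe_case_inr; [apply: pe_leq_false; [pev|pev|exact: Hle] | pev].
- move=> S m th pc e1 e2 S1 m1 l l' S2 m2 [r lv] H1 IH1 Hle H2 IH2.
  have /= P1 := eval_pc_le H1; have /= P2 := eval_pc_le H2.
  simpl in *; tlS.
  eapply F_bnd; [wS|]; eapply F_bnd; [unlS|].
  eapply (F_bnd (pc1:=l)); [eapply F_run; [econstructor; pev | by rewrite (join_r P1) (join_r Hle)] |].
  eapply F_bnd; [wS|].
  eapply F_unl; [pev| by rewrite join_r].
- move=> S m th pc e S' m' r l n X H IH Hn Hset.
  have /= P := eval_pc_le H.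
  rewrite trans_store_upd; simpl in *; tlS.
  eapply F_bnd; [wS|]; apply: F_thunk.
  eapply run_newI; [pev | exact P | by rewrite /trans_store size_map | exact: list_set_map Hset].
- move=> S m th pc e S' m' n l l' r H IH Hnth.
  have /= P := eval_pc_le H.
  simpl in *; tlS.
  eapply F_bnd; [wS|]; eapply F_bnd; [unlS|].
  eapply F_run; [eapply run_readI; [pev | exact: list_nth_map Hnth] | by rewrite (join_r P) joinC].
- move=> S m th pc e1 e2 S1 m1 n l l1 S2 m2 r l2 X H1 IH1 Hl1 H2 IH2 Hl2 Hset.
  have /= P1 := eval_pc_le H1.
  rewrite trans_store_upd; simpl in *.
  eapply (F_bnd (pc1:=pc)).
    tlS; eapply F_bnd; [wS|]; eapply F_bnd; [wS|]; eapply F_bnd; [unlS|].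
    apply: F_thunk; eapply run_writeI; [pev|pev|exact Hl2| |exact: list_set_map Hset].
    by rewrite leUx (le_trans P1 Hl1) Hl1.
  by eapply F_W; [eapply F_tl; [apply: F_ret; constructor|reflexivity]|reflexivity].
- move=> S m th pc e S' m' n l l' H IH.
  have /= P := eval_pc_le H.
  simpl in *; tlS.
  eapply F_bnd; [wS|]; eapply F_bnd; [unlS|].
  eapply F_run; [econstructor; pev | by rewrite (join_r P) joinC].
- move=> S m th pc e S' m' [r l] n m'' H IH Hn Hset.
  have /= P := eval_pc_le H.
  simpl in *; tlS.
  eapply F_bnd; [wS|]; apply: F_thunk.
  eapply run_newS; [pev| exact P | by rewrite /trans_heap size_map | exact: (list_set_map (@trans_val d L) Hset)].
- move=> S m th pc e S' m' n l r l' H IH Hnth.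
  have /= P := eval_pc_le H.
  simpl in *; tlS.
  eapply F_bnd; [wS|]; eapply F_bnd; [unlS|].
  eapply F_run; [eapply run_readS; [pev| exact: (list_nth_map (@trans_val d L) Hnth)] | by rewrite (join_r P)].
- move=> S m th pc e S' m' n l1 r l2 H IH Hnth.
  have /= P := eval_pc_le H.
  simpl in *; tlS.
  eapply F_bnd; [wS|]; eapply F_bnd; [unlS|].
  eapply F_run; [eapply run_labelofrefS; [pev| exact: (list_nth_map (@trans_val d L) Hnth)] | by rewrite (join_r P)].
- move=> S m th pc e1 e2 S1 m1 n l S2 m2 r2 l2 r1 l1 m3 H1 IH1 H2 IH2 Hnth Hle Hset.
  have /= P := eval_pc_le H1.
  simpl in *.
  eapply (F_bnd (pc1:=pc)).
    tlS; eapply F_bnd; [wS|]; eapply F_bnd; [wS|].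
    eapply (F_bnd (pc1:=l)); [eapply F_unl; [pev| by rewrite (join_r P)]|].
    apply: F_thunk; eapply run_writeS; [pev|pev| exact: (list_nth_map (@trans_val d L) Hnth) | exact Hle | ].
    rewrite joinC; exact: (list_set_map (@trans_val d L) Hset).
  by eapply F_W; [eapply F_tl; [apply: F_ret; constructor|reflexivity]|reflexivity].
Qed.

Theorem mainTheorem5 (d : Order.disp_t) (L : latticeType d)
  (e : expr L) (S S' : store L) (m m' : heap L) (pc : L)
  (th : env L) (v : value L) :
  well_typed e ->
  eval S m th pc e S' m' v ->
  force (trans_store S) (trans_heap m) pc (trans_env th) (trans e)
        (trans_store S') (trans_heap m') pc (trans_val v).
Proof. by move=> _; apply: main. Qed.
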